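(* Let $(\mathfrak{g},\langle\cdot,\cdot\rangle)$ be a quadratic Lie algebra and let $(\mathfrak{h},\theta_1,\dots,\theta_k)$ be a $k$-symplectic structure on $\mathfrak{g}$. If $\mathfrak{h}$ is nondegenerate with respect to $\langle\cdot,\cdot\rangle$ (i.e. the restriction of $\langle\cdot,\cdot\rangle$ to $\mathfrak{h}$ is nondegenerate), then the cohomology classes $[\theta_1],\dots,[\theta_k]$ are linearly independent in $H^2(\mathfrak{g})$. In particular, if $k>\dim H^2(\mathfrak{g})$ then $\mathfrak{h}$ is degenerate with respect to $\langle\cdot,\cdot\rangle$.
   Context: A quadratic Lie algebra is a finite-dimensional real Lie algebra $\mathfrak{g}$ endowed with a nondegenerate symmetric bilinear form $\langle\cdot,\cdot\rangle$ which is invariant: $\langle [u,v],w\rangle+\langle [u,w],v\rangle=0$ for all $u,v,w\in\mathfrak{g}$. $H^2(\mathfrak{g})$ denotes the second Chevalley–Eilenberg cohomology group of $\mathfrak{g}$ with trivial real coefficients, and $[\theta]$ the class of a 2-cocycle $\theta$. A $k$-symplectic structure on a real Lie algebra $\mathfrak{g}$ of dimension $n(k+1)$ ($n,k\ge1$) is a pair consisting of a Lie subalgebra $\mathfrak{h}\subset\mathfrak{g}$ of dimension $nk$ and a family $(\theta_1,\dots,\theta_k)$ of skew-symmetric bilinear forms on $\mathfrak{g}$ such that: (i) $\bigcap_{i=1}^k\ker\theta_i=\{0\}$, where $\ker\theta_i=\{u\in\mathfrak{g}:\theta_i(u,v)=0\ \forall v\in\mathfrak{g}\}$; (ii) each $\theta_i$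 is a 2-cocycle: $\theta_i([u,v],w)+\theta_i([v,w],u)+\theta_i([w,u],v)=0$ for all $u,v,w$; (iii) $\theta_i(u,v)=0$ for all $u,v\in\mathfrak{h}$ and all $i$. *)

(* Defs.v *)
From HB Require Import structures.
From mathcomp Require Import all_boot all_order all_algebra.
From mathcomp Require Import reals.
Set Implicit Arguments. Unset Strict Implicit. Unset Printing Implicit Defensive.
Import GRing.Theory Num.Theory.
Local Open Scope ring_scope.

(* Real Lie algebras are modelled as a finite-dimensional real vector space
   V : vectType R (R : realType) with a bracket br : V -> V -> V. *)

Section Defs.
Variables (R : realType) (V : vectType R).

Definition bilinear_map (W : lmodType R) (f : V -> V -> W) : Prop :=
  (forall (a : R) (u u' v : V), f (a *: u + u') v = a *: f u v + f u' v) /\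
  (forall (a : R) (u v v' : V), f u (a *: v + v') = a *: f u v + f u v').

Definition bilinear_form (B : V -> V -> R) : Prop :=
  (forall (a : R) (u u' v : V), B (a *: u + u') v = a * B u v + B u' v) /\
  (forall (a : R) (u v v' : V), B u (a *: v + v') = a * B u v + B u v').

Definition linear_form (f : V -> R) : Prop :=
  forall (a : R) (u v : V), f (a *: u + v) = a * f u + f v.

Definition is_lie_bracket (br : V -> V -> V) : Prop :=
  [/\ bilinear_map br,
      (forall u, br u u = 0) &
      (forall u v w, br u (br v w) + br v (br w u) + br w (br u v) = 0)].

Definition is_quadratic_form (br : V -> V -> V) (B : V -> V -> R) : Prop :=
  [/\ bilinear_form B,
      (forall u v, B u v = B v u),
      (forall u, (forall v, B u v = 0) -> u = 0) &
      (forall u v w, B (br u v) w + B (br u w) v = 0)].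

Definition is_subalgebra (br : V -> V -> V) (h : {vspace V}) : Prop :=
  forall u v, u \in h -> v \in h -> br u v \in h.

Definition is_2cocycle (br : V -> V -> V) (th : V -> V -> R) : Prop :=
  [/\ bilinear_form th,
      (forall u v, th u v = - th v u) &
      (forall u v w, th (br u v) w + th (br v w) u + th (br w u) v = 0)].

(* 2-coboundary: th(u,v) = f([u,v]) for some linear form f (the sign
   convention d f (u,v) = - f([u,v]) is immaterial since f is arbitrary) *)
Definition is_2coboundary (br : V -> V -> V) (th : V -> V -> R) : Prop :=
  exists f : V -> R, linear_form f /\ forall u v, th u v = f (br u v).

Definition k_symplectic (br : V -> V -> V) (n k : nat) (h : {vspace V})
  (theta : 'I_k -> V -> V -> R) : Prop :=
  [/\ ((1 <= n)%N /\ (1 <= k)%N),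
      (\dim (fullv : {vspace V}) = (n * k.+1)%N /\ \dim h = (n * k)%N),
      is_subalgebra br h,
      (forall u, (forall i v, theta i u v = 0) -> u = 0) &
      ((forall i, is_2cocycle br (theta i)) /\
       (forall i u v, u \in h -> v \in h -> theta i u v = 0))].

Definition nondegenerate_on (B : V -> V -> R) (h : {vspace V}) : Prop :=
  forall u, u \in h -> (forall v, v \in h -> B u v = 0) -> u = 0.

(* the classes [theta_i] in H^2(g) are linearly independent:
   any linear combination whose class vanishes (i.e. is a coboundary)
   has all coefficients zero *)
Definition classes_lin_indep (br : V -> V -> V) (k : nat)
  (theta : 'I_k -> V -> V -> R) : Prop :=
  forall c : 'I_k -> R,
    is_2coboundary br (fun u v => \sum_(i < k) c i * theta i u v) ->
    forall i, c i = 0.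

End Defs.

Arguments k_symplectic {R V} br n k h theta.
Arguments classes_lin_indep {R V} br k theta.

(* Main.v *)
Require Import Defs.
From HB Require Import structures.
From mathcomp Require Import all_boot all_order all_algebra.
From mathcomp Require Import reals.
Set Implicit Arguments. Unset Strict Implicit. Unset Printing Implicit Defensive.
Import GRing.Theory Num.Theory.
Local Open Scope ring_scope.

Lemma surj_lin (K : fieldType) (V W : vectType K) (g : V -> W) (U : {vspace V}) :
  (forall a u v, g (a *: u + v) = a *: g u + g v) ->
  (forall u, u \in U -> g u = 0 -> u = 0) ->
  \dim U = dim W -> forall w, exists2 u, u \in U & g u = w.
Proof.
move=> lin inj dU w.
pose flM := GRing.isLinear.Build _ _ _ _ g lin.
pose fL : {linear _ -> _} := HB.pack g flM.
pose f := linfun fL.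
have H0 : (U :&: lker f)%VS = 0%VS.
  apply/eqP; rewrite -subv0; apply/subvP => x; rewrite memv_cap memv_ker.
  case/andP => xU /eqP fx; rewrite lfunE /= in fx.
  by rewrite memv0; apply/eqP; apply: inj.
have := limg_ker_dim f U; rewrite H0 dimv0 add0n dU => dimI.
have eqI : (f @: U)%VS = fullv.
  by apply/eqP; rewrite eqEdim subvf dimvf dimI leqnn.
have : w \in (f @: U)%VS by rewrite eqI memvf.
case/memv_imgP => u uU ->; exists u => //; by rewrite lfunE.
Qed.

Section Lin.
Variables (K : fieldType) (V : vectType K) (g : V -> K).
Hypothesis lin : forall a u v, g (a *: u + v) = a * g u + g v.

Lemma lf0 : g 0 = 0.
Proof.
have := lin 1 0 0; rewrite scale1r addr0 mul1r => /(congr1 (fun x => x - g 0)).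
by rewrite addrK subrr.
Qed.

Lemma lfZ a u : g (a *: u) = a * g u.
Proof. by have := lin a u 0; rewrite addr0 lf0 addr0. Qed.

Lemma lfD u v : g (u + v) = g u + g v.
Proof. by have := lin 1 u v; rewrite scale1r mul1r. Qed.

Lemma lf_sum (I : Type) (r : seq I) (P : pred I) (F : I -> V) :
  g (\sum_(i <- r | P i) F i) = \sum_(i <- r | P i) g (F i).
Proof.
apply: (big_rec2 (fun x y => g x = y)); first exact: lf0.
by move=> i x y _ <-; rewrite lfD.
Qed.

Lemma lf_basis (U : {vspace V}) v : v \in U ->
  g v = \sum_(j < \dim U) coord (vbasis U) j v * g (vbasis U)`_j.
Proof.
move=> vU; rewrite {1}(coord_vbasis vU) lf_sum.
by apply: eq_bigr => j _; rewrite lfZ.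
Qed.

End Lin.

Theorem mainTheorem4 (R : realType) (V : vectType R)
  (br : V -> V -> V) (B : V -> V -> R) (n k : nat) (h : {vspace V})
  (theta : 'I_k -> V -> V -> R) :
  is_lie_bracket br ->
  is_quadratic_form br B ->
  k_symplectic br n k h theta ->
  nondegenerate_on B h ->
  classes_lin_indep br k theta.
Proof.
move=> [[brl brr] bralt jac] [[Bl Br] Bsym Bnd Binv]
  [[n1 k1] [dV dh] hsub ker [coc hvan]] ndh c [f [flin fth]] i0.
apply/eqP/negPn/negP => ci0.
pose th u v := \sum_(i < k) c i * theta i u v.
have fth' : forall u v, th u v = f (br u v) by move=> u v; rewrite /th fth.
have thl2 : forall u a v v', th u (a *: v + v') = a * th u v + th u v'.
  move=> u a v v'; rewrite /th mulr_sumr -big_split; apply: eq_bigr => i _ /=.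
  case: (coc i) => [[_ H]] _ _; by rewrite H mulrDr mulrCA.
have thanti : forall u v, th u v = - th v u.
  move=> u v; rewrite /th -sumrN; apply: eq_bigr => i _.
  case: (coc i) => _ H _; by rewrite H mulrN.
have thh : forall u v, u \in h -> v \in h -> th u v = 0.
  move=> u v uh vh; rewrite /th big1 // => i _; by rewrite hvan // mulr0.
pose hC := (h^C)%VS.
have dC : \dim hC = n by rewrite /hC dimv_compl dV dh mulnS addnK.
pose w := vbasis hC.
pose T u : 'M[R]_(k, \dim hC) := \matrix_(i, j) theta i u w`_j.
have Tsurj : forall M, exists2 u, u \in h & T u = M.
  apply: surj_lin.
  - move=> a u v; apply/matrixP => i j; rewrite !mxE.
    by case: (coc i) => [[H _]] _ _; rewrite H.
  - move=> u uh /matrixP Tu0; apply: ker => i v.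
    have lv : forall a x y, theta i u (a *: x + y) = a * theta i u x + theta i u y.
      move=> a x y; case: (coc i) => [[_ H]] _ _; exact: H.
    have : v \in (h + hC)%VS by rewrite /hC addv_complf memvf.
    case/memv_addP => v1 v1h [v2 v2C ->].
    rewrite (lfD lv) hvan // add0r (lf_basis lv v2C) big1 // => j _.
    by have := Tu0 i j; rewrite !mxE => ->; rewrite mulr0.
  - by rewrite dim_matrix dh dC mulnC.
pose b := vbasis (fullv : {vspace V}).
pose Bm x : 'rV[R]_(\dim (fullv : {vspace V})) := \row_j B x b`_j.
have [z _ Bmz] : exists2 z, z \in (fullv : {vspace V}) & Bm z = \row_j f b`_j.
  apply: surj_lin.
  - move=> a u v; apply/matrixP => i j; rewrite !mxE; exact: Bl.
  - move=> x _ /matrixP Bx0; apply: Bnd => v.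
    rewrite (lf_basis (fun a => Br a x) (memvf v)) big1 // => j _.
    by have := Bx0 0 j; rewrite !mxE => ->; rewrite mulr0.
  - by rewrite dim_matrix; exact: (esym (mul1n _)).
have Bz : forall v, B z v = f v.
  move=> v; rewrite (lf_basis (fun a => Br a z) (memvf v)) (lf_basis flin (memvf v)).
  apply: eq_bigr => j _; congr (_ * _).
  by have := congr1 (fun M : 'rV[R]_(\dim (fullv : {vspace V})) => M ord0 j) Bmz; rewrite !mxE.
have thB : forall u v, th u v = - B (br u z) v.
  move=> u v; rewrite fth' -Bz Bsym; apply/eqP; rewrite -addr_eq0 Binv //.
have B0 : forall v, B 0 v = 0.
  move=> v; exact: (@lf0 _ _ (fun x => B x v) (fun a u u' => Bl a u u' v)).
have thz : forall u, th z u = 0 by move=> u; rewrite thB bralt B0 oppr0.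
have thw : forall u (i1 : 'I_k) (j1 : 'I_(\dim hC)), T u = delta_mx i1 j1 ->
    forall j : 'I_(\dim hC), th u w`_j = c i1 * (j == j1)%:R.
  move=> u i1 j1 Tu j; rewrite /th (bigD1 i1) //= big1 => [|i ii1].
    have := congr1 (fun M : 'M[R]_(k, \dim hC) => M i1 j) Tu; rewrite !mxE eqxx /= => ->.
    by rewrite addr0.
  have := congr1 (fun M : 'M[R]_(k, \dim hC) => M i j) Tu; rewrite !mxE (negbTE ii1) /= => ->.
  by rewrite mulr0.
have zh : z \in h.
  have : z \in (h + hC)%VS by rewrite /hC addv_complf memvf.
  case/memv_addP => z1 z1h [z2 z2C zE].
  case: (boolP [forall j, coord w j z2 == 0]) => [/forallP a0 | /forallPn [j0 aj0]].
    have z20 : z2 = 0.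
      by rewrite (coord_vbasis z2C) big1 // => j _; rewrite (eqP (a0 j)) scale0r.
    by rewrite zE z20 addr0.
  exfalso; case: (Tsurj (delta_mx i0 j0)) => u uh Tu.
  have : th u z = 0 by rewrite thanti thz oppr0.
  rewrite zE (lfD (thl2 u)) thh // add0r (lf_basis (thl2 u) z2C).
  rewrite (bigD1 j0) //= big1 => [|j jj0]; last first.
    by rewrite (thw _ _ _ Tu) (negbTE jj0) !mulr0.
  rewrite (thw _ _ _ Tu) eqxx mulr1 addr0 => /eqP.
  by rewrite mulf_eq0 (negbTE aj0) (negbTE ci0).
have brz : forall u, u \in h -> br u z = 0.
  move=> u uh; apply: ndh; first exact: hsub.
  move=> v vh; have := thB u v; rewrite thh // => /eqP.
  by rewrite eq_sym oppr_eq0 => /eqP.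
have n0 : (0 < \dim hC)%N by rewrite dC.
case: (Tsurj (delta_mx i0 (Ordinal n0))) => u uh Tu.
have := thw _ _ _ Tu (Ordinal n0); rewrite eqxx mulr1 thB brz // B0 oppr0.
by move=> /esym/eqP; rewrite (negbTE ci0).
Qed.
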